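(* Let $q\in\mathbb C\setminus\{0\}$ with $q^2\ne1$, $n\ge1$, $\eta_1,\dots,\eta_n\in\mathbb C\setminus\{0\}$ and $\alpha_1,\dots,\alpha_n\in\mathbb Z_{\ge0}$, such that all denominators below are nonzero. Then $$\sum_{a=1}^{n}[\alpha_a]\prod_{i\ne a}\frac{q^{\alpha_a}\eta_i/\eta_a-\eta_a/(q^{\alpha_a}\eta_i)}{q^{\alpha_a-\alpha_i}\eta_i/\eta_a-\eta_a/(q^{\alpha_a-\alpha_i}\eta_i)}=\Big[\sum_{a=1}^n\alpha_a\Big],$$ where $[r]=(q^r-q^{-r})/(q-q^{-1})$. *)

(* Defs.v *)
(* The field of complex numbers is taken to be an arbitrary
   numClosedFieldType (algebraically closed field with conjugation/norm),
   of which C is the model. *)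
From HB Require Import structures.
From mathcomp Require Import all_boot all_order all_algebra.
Set Implicit Arguments. Unset Strict Implicit. Unset Printing Implicit Defensive.
Import Order.TTheory GRing.Theory Num.Theory.
Local Open Scope ring_scope.

Definition qnum (C : numClosedFieldType) (q : C) (r : int) : C :=
  (q ^ r - q ^ (- r)) / (q - q^-1).

(* Main.v *)
Require Import Defs.
From HB Require Import structures.
From mathcomp Require Import all_boot all_order all_algebra ring.
Import Order.TTheory GRing.Theory Num.Theory.
Local Open Scope ring_scope.

Lemma size_ie n : size (index_enum 'I_n) = n.
Proof. by rewrite [index_enum _]unlock -enumT size_enum_ord. Qed.

Lemma key_poly (K : fieldType) n (X Y : 'I_n -> K) :
  (forall i, Y i != 0) -> (forall i j, i != j -> Y i != Y j) ->
  let g := \prod_(i < n) ('X - (X i)%:P) in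
  let d := \prod_(i < n) ('X - (Y i)%:P) in
  let da := fun a => \prod_(i < n | i != a) ('X - (Y i)%:P) in
  1 - g.[0] / d.[0] - \sum_(a < n) g.[Y a] / (Y a * (da a).[Y a]) = 0.
Proof.
move=> Y0 Yinj g d da.
have d0 : d.[0] != 0.
  rewrite /d horner_prod; apply/prodf_neq0 => i _.
  by rewrite hornerXsubC sub0r oppr_eq0.
have dan a : (da a).[Y a] != 0.
  rewrite /da horner_prod; apply/prodf_neq0 => i ia.
  by rewrite hornerXsubC subr_eq0 eq_sym Yinj.
have dab a b : b != a -> (da a).[Y b] = 0.
  move=> ba; rewrite /da horner_prod (bigD1 b) //=.
  by rewrite hornerXsubC subrr mul0r.
have dd a : d = ('X - (Y a)%:P) * da a by rewrite /d (bigD1 a).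
have sd : size d = n.+1 by rewrite /d size_prod_XsubC size_ie.
have sg : size g = n.+1 by rewrite /g size_prod_XsubC size_ie.
have sda a : size ('X * da a) = n.+1.
  have := sd; rewrite (dd a) size_monicM ?monicXsubC //; last first.
    by apply: monic_neq0; apply: monic_prod_XsubC.
  rewrite size_XsubC /= add1n => -[] Hs.
  rewrite size_monicM ?monicX //; last by apply: monic_neq0; apply: monic_prod_XsubC.
  by rewrite size_polyX Hs.
set P := g - (g.[0] / d.[0]) *: d - \sum_(a < n) (g.[Y a] / (Y a * (da a).[Y a])) *: ('X * da a).
have P0 : P = 0.
  apply: (@roots_geq_poly_eq0 _ P (0 :: [seq Y i | i <- index_enum 'I_n])).
  - rewrite /= ; apply/andP; split.
      rewrite /root /P !(hornerD, hornerN, hornerZ) horner_sum big1 ?subr0; first by rewrite divfK // subrr.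
      by move=> a _; rewrite hornerZ hornerM hornerX mul0r mulr0.
    apply/allP => _ /mapP [b _ ->].
    rewrite /root /P !(hornerD, hornerN, hornerZ) horner_sum (bigD1 b) //= big1; last first.
      by move=> a ab; rewrite hornerZ hornerM (dab a b) ?mulr0 // eq_sym.
    have -> : d.[Y b] = 0 by rewrite (dd b) hornerM hornerXsubC subrr mul0r.
    rewrite mulr0 subr0 addr0 hornerZ hornerM hornerX.
    by rewrite divfK ?subrr // mulf_neq0.
  - rewrite /= map_inj_uniq ?index_enum_uniq; last first.
      by move=> i j /eqP; apply: contraTeq => ij; rewrite Yinj.
    rewrite andbT; apply/mapP => -[b _ /eqP]; rewrite eq_sym; apply/negP; exact: Y0.
  - rewrite /= size_map size_ie.
    rewrite /P; apply: leq_trans (size_polyD _ _) _; rewrite geq_max; apply/andP; split.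
      apply: leq_trans (size_polyD _ _) _; rewrite geq_max size_polyN sg leqnn /=.
      by apply: leq_trans (size_scale_leq _ _) _; rewrite sd.
    rewrite size_polyN; apply: leq_trans (size_sum _ _ _) _.
    apply/bigmax_leqP => a _; apply: leq_trans (size_scale_leq _ _) _; by rewrite sda.
have := congr1 (fun p : {poly K} => p`_n) P0.
rewrite /P coef0 !coefB coefZ coef_sum.
have mon (p : {poly K}) : p \is monic -> size p = n.+1 -> p`_n = 1.
  by move=> /monicP; rewrite lead_coefE => <- ->.
rewrite (mon g _ sg) ?monic_prod_XsubC // (mon d _ sd) ?monic_prod_XsubC //.
rewrite (eq_bigr (fun a => g.[Y a] / (Y a * (da a).[Y a]))) ?mulr1 //.
by move=> a _; rewrite coefZ (mon _ _ (sda a)) ?mulr1 // monicMl ?monicX ?monic_prod_XsubC.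
Qed.


Lemma key (K : fieldType) n (X Y : 'I_n -> K) :
  (forall i, Y i != 0) -> (forall i j, i != j -> Y i != Y j) ->
  \sum_(a < n) (X a - Y a) / Y a * \prod_(i < n | i != a) ((X i - Y a) / (Y i - Y a))
  = \prod_(i < n) (X i / Y i) - 1.
Proof.
move=> Y0 Yinj; have := @key_poly _ _ X Y Y0 Yinj => /=.
have -> : (\prod_(i < n) ('X - (X i)%:P)).[0] / (\prod_(i < n) ('X - (Y i)%:P)).[0]
   = \prod_(i < n) (X i / Y i).
  rewrite !horner_prod -prodf_div; apply: eq_bigr => i _.
  by rewrite !hornerXsubC !sub0r invrN mulrNN.
have E2 a : (\prod_(i < n) ('X - (X i)%:P)).[Y a] /
     (Y a * (\prod_(i < n | i != a) ('X - (Y i)%:P)).[Y a])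
   = - ((X a - Y a) / Y a * \prod_(i < n | i != a) ((X i - Y a) / (Y i - Y a))).
  have -> : \prod_(i < n | i != a) ((X i - Y a) / (Y i - Y a))
     = \prod_(i < n | i != a) (Y a - X i) / \prod_(i < n | i != a) (Y a - Y i).
    by rewrite -prodf_div; apply: eq_bigr => i _; rewrite -mulrNN -invrN !opprB.
  rewrite !horner_prod (bigD1 a) //=.
  under eq_bigr => i _ do rewrite hornerXsubC.
  rewrite hornerXsubC (_ : \prod_(i < n | i != a) ('X - (Y i)%:P).[Y a] = \prod_(i < n | i != a) (Y a - Y i)); last by apply: eq_bigr => i _; rewrite hornerXsubC.
  by rewrite !invfM; ring.
rewrite (eq_bigr _ (fun a _ => E2 a)).
rewrite sumrN opprK => H; apply/eqP; rewrite -subr_eq0 -[X in _ == X]H; apply/eqP.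
ring.
Qed.

Lemma factor_eq (K : fieldType) (u p ei ea : K) : u != 0 -> p != 0 -> ei != 0 -> ea != 0 ->
 (ei / p) ^+ 2 - (ea / u) ^+ 2 != 0 ->
 (u * ei / ea - ea / (u * ei)) / (u / p * ei / ea - ea / (u / p * ei)) =
 p^-1 * ((ei ^+ 2 - (ea / u) ^+ 2) / ((ei / p) ^+ 2 - (ea / u) ^+ 2)).
Proof.
move=> hu hp hi ha hy.
have E : (ei * u) ^+ 2 + - ea ^+ 2 * p ^+ 2 = ((ei / p) ^+ 2 - (ea / u) ^+ 2) * (p * u) ^+ 2.
  by field; rewrite hu hp.
field; rewrite hu hp hi ha E mulf_neq0 // expf_neq0 // mulf_neq0 //.
Qed.

Lemma Y_neq (K : fieldType) (u p ei ea : K) : u != 0 -> p != 0 -> ei != 0 -> ea != 0 ->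
 (u / p * ei / ea - ea / (u / p * ei)) != 0 -> (ei / p) ^+ 2 - (ea / u) ^+ 2 != 0.
Proof.
move=> hu hp hi ha hd.
have -> : (ei / p) ^+ 2 - (ea / u) ^+ 2 = (u / p * ei / ea - ea / (u / p * ei)) * (ea / u) ^+ 2 * (u / p * ei / ea).
  by field; rewrite hu hp hi ha.
by rewrite !mulf_neq0 ?expf_neq0 ?invr_neq0.
Qed.

Lemma qpart (K : fieldType) (u q R ea : K) : u != 0 -> q != 0 -> q * q - 1 != 0 -> ea != 0 ->
 (u - u^-1) / (q - q^-1) * R = (u^-1 * R) / (q - q^-1) * ((ea ^+ 2 - (ea / u) ^+ 2) / ((ea / u) ^+ 2)).
Proof. by move=> hu hq hq2 ha; field; rewrite hu hq hq2 ha. Qed.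

Lemma finalpart (K : fieldType) (q M : K) : M != 0 -> q != 0 -> q * q - 1 != 0 ->
  M^-1 / (q - q^-1) * (M ^+ 2 - 1) = (M - M^-1) / (q - q^-1).
Proof. by move=> hM hq hq2; field; rewrite hM hq hq2. Qed.

Theorem mainTheorem6 (C : numClosedFieldType) (q : C) (n : nat)
  (eta : 'I_n -> C) (alpha : 'I_n -> nat)
  (hq0 : q != 0) (hq2 : q ^+ 2 != 1) (hn : (0 < n)%N)
  (heta : forall i, eta i != 0)
  (hden : forall a i : 'I_n, i != a ->
     q ^ ((alpha a)%:Z - (alpha i)%:Z) * eta i / eta a
       - eta a / (q ^ ((alpha a)%:Z - (alpha i)%:Z) * eta i) != 0) :
  \sum_(a < n) qnum q (alpha a)%:Z *
     \prod_(i < n | i != a)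
       ((q ^+ alpha a * eta i / eta a - eta a / (q ^+ alpha a * eta i)) /
        (q ^ ((alpha a)%:Z - (alpha i)%:Z) * eta i / eta a
           - eta a / (q ^ ((alpha a)%:Z - (alpha i)%:Z) * eta i)))
  = qnum q (\sum_(a < n) alpha a)%N%:Z.
Proof.
have hp k : q ^+ k != 0 := expf_neq0 k hq0.
have hqq : q * q - 1 != 0 by rewrite subr_eq0 -expr2.
have qz a i : q ^ ((alpha a)%:Z - (alpha i)%:Z) = q ^+ alpha a / q ^+ alpha i.
  by rewrite expfzDr // -exprnN.
pose X i := eta i ^+ 2.
pose Y i := (eta i / q ^+ alpha i) ^+ 2.
have Y0 i : Y i != 0 by rewrite expf_neq0 // mulf_neq0 ?invr_neq0.
have hy a i : i != a -> Y i - Y a != 0.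
  by move=> ia; have := hden a i ia; rewrite qz; apply: Y_neq.
have Yinj i j : i != j -> Y i != Y j by move=> ij; rewrite -subr_eq0 hy.
rewrite (eq_bigr (fun a => ((q - q^-1)^-1 * (\prod_(i < n) (q ^+ alpha i)^-1)) *
   ((X a - Y a) / Y a * \prod_(i < n | i != a) ((X i - Y a) / (Y i - Y a))))); last first.
  move=> a _.
  rewrite (eq_bigr (fun i => (q ^+ alpha i)^-1 * ((X i - Y a) / (Y i - Y a)))); last first.
    by move=> i ia; rewrite qz factor_eq //; apply: hy.
  rewrite big_split /= /qnum -exprnN [X in _ = _ * X * _](bigD1 a) //=.
  have -> : q ^ (alpha a)%:Z = q ^+ alpha a by [].
  move: (\prod_(i < n | i != a) (q ^+ alpha i)^-1) (\prod_(i < n | i != a) ((X i - Y a) / (Y i - Y a))) => A B.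
  by rewrite /X /Y; field; rewrite hp hq0 hqq heta.
rewrite -mulr_sumr key //.
have EXY i : X i / Y i = (q ^+ alpha i) ^+ 2.
  by rewrite /X /Y; field; rewrite hp heta.
rewrite (eq_bigr _ (fun i _ => EXY i)).
rewrite prodrXl prodfV prodrXr /qnum -exprnN.
have -> : q ^ (\sum_(a < n) alpha a)%N%:Z = q ^+ (\sum_(a < n) alpha a)%N by [].
by field; rewrite hp hq0 hqq.
Qed.
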